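(* Let $n$ be a positive even integer. Then $\mathrm{VR}(T_{n,n};\operatorname{diam}(T_{n,n})-1)\simeq S^{\frac{n^2}{2}-1}$.
   Context: For a metric space $X$ and $r\ge 0$, $\mathrm{VR}(X;r)$ is the simplicial complex on vertex set $X$ whose simplices are the finite nonempty subsets of diameter at most $r$. $T_{n,n}$ is the set $\{0,\dots,n-1\}^2$ with metric $d((i,j),(i',j'))=\min\{|i-i'|,n-|i-i'|\}+\min\{|j-j'|,n-|j-j'|\}$; $\operatorname{diam}(T_{n,n})$ is its diameter (equal to $n$ for even $n$). *)

(* Defs.v *)
From mathcomp Require Import all_boot all_order all_algebra.
From mathcomp Require Import all_classical all_reals topology.
From mathcomp Require Import function_spaces normedtype.
Set Implicit Arguments. Unset Strict Implicit. Unset Printing Implicit Defensive.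
Import Order.TTheory GRing.Theory Num.Theory.
Import numFieldNormedType.Exports.
Local Open Scope classical_set_scope.
Local Open Scope ring_scope.

Definition absdn (a b : nat) : nat := ((a - b) + (b - a))%N.

(* cyclic distance on Z/n, with representatives 0..n-1 *)
Definition cycd (n a b : nat) : nat := minn (absdn a b) (n - absdn a b).

Definition torus_dist (n : nat) (p q : 'I_n * 'I_n) : nat :=
  (cycd n p.1 q.1 + cycd n p.2 q.2)%N.

Definition fdiam (V : finType) (d : V -> V -> nat) : nat :=
  \max_(pq : V * V) d pq.1 pq.2.

Definition VR_simplex (V : finType) (d : V -> V -> nat) (r : nat)
  (s : {set V}) : bool :=
  (s != finset.set0) && [forall u in s, forall v in s, (d u v <= r)%N].

(* geometric realization of a finite simplicial complex K on vertex set V: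
   points are barycentric-coordinate functions V -> R (nonneg, summing to 1)
   whose support is a simplex of K; topology: subspace of R^V (product). *)
Definition realization (R : realType) (V : finType) (K : pred {set V})
  : set {ptws V -> R} :=
  [set x | (forall v, 0 <= x v) /\ \sum_(v : V) x v = 1
           /\ K (finset.finset (fun v => 0 < x v))].

Definition sphere (R : realType) (m : nat) : set 'rV[R]_(m.+1) :=
  [set y | \sum_(i < m.+1) (y ord0 i) ^+ 2 = 1].

(* f, g : A -> B (represented on ambient spaces) are homotopic as maps A -> B *)
Definition homotopic (R : realType) (X Y : topologicalType)
  (A : set X) (B : set Y) (f g : X -> Y) : Prop :=
  exists H : R * X -> Y,
    {within `[0, 1]%classic `*` A, continuous H} /\
    (forall t x, `[0, 1]%classic t -> A x -> B (H (t, x))) /\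
    (forall x, A x -> H (0, x) = f x) /\
    (forall x, A x -> H (1, x) = g x).

Definition homotopy_equivalent (R : realType) (X Y : topologicalType)
  (A : set X) (B : set Y) : Prop :=
  exists (f : X -> Y) (g : Y -> X),
    [/\ {within A, continuous f}, f @` A `<=` B,
        {within B, continuous g} & g @` B `<=` A] /\
    (homotopic R A A (g \o f) id /\ homotopic R B B (f \o g) id).

Arguments realization R {V} K _.
Arguments sphere : clear implicits.
Arguments homotopic R {X Y} A B f g.
Arguments homotopy_equivalent R {X Y} A B.

(* Main.v *)
Require Import Defs.
From mathcomp Require Import all_boot all_order all_algebra.
From mathcomp Require Import all_classical all_reals topology.
From mathcomp Require Import function_spaces normedtype.
From mathcomp Require Import realfun zify.
Import numFieldNormedType.Exports.
Import Order.TTheory GRing.Theory Num.Theory.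

Section Part1.
Local Open Scope classical_set_scope.
Local Open Scope ring_scope.

Lemma ptws_eval (R : realType) (V : finType) (v : V) :
  continuous (fun x : {ptws V -> R} => x v).
Proof. exact: (@proj_continuous V (fun _ => R) v). Qed.

Lemma ptws_cont (R : realType) (V : finType) (T : topologicalType) (F : T -> {ptws V -> R}) x :
  (forall v, {for x, continuous (fun t => F t v)}) -> {for x, continuous F}.
Proof.
move=> H. rewrite /continuous_at. apply/cvg_sup => i A /=.
rewrite nbhsE => -[B [[U oU <-] Bt] BA].
have := H i U. 
have h : nbhs (F x i) U by rewrite nbhsE; exists U => //; split.
move=> /(_ h) hh. have : nbhs x (F @^-1` A). apply: (@filterS _ (nbhs x) _ (F^~ i @^-1` U)) hh. move=> t Ut; exact: BA. by rewrite nbhsE.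
Qed.

Lemma mx_cont (R : realType) m n (T : topologicalType) (F : T -> 'M[R]_(m,n)) x :
  (forall i j, {for x, continuous (fun t => F t i j)}) -> {for x, continuous F}.
Proof.
move=> H. apply/cvg_mx_entourageP => A entA.
apply: filter_forall => i; apply: filter_forall => j.
have := H i j. move=> /cvg_entourageP /(_ A entA) hh. apply: (@filterS _ (nbhs x) _ _ _ _ hh) => t /=.
by rewrite inE.
Qed.

Lemma sum_cont (R : realType) (I : finType) (T : topologicalType) (F : I -> T -> R) x :
  (forall i, {for x, continuous (F i)}) -> {for x, continuous (fun t => \sum_i F i t)}.
Proof.
move=> H.
suff S : forall r, (fun t => \sum_(i <- r) F i t) @ x --> \sum_(i <- r) F i x by exact: S.
elim => [|i r IH].
  have -> : (fun t => \sum_(i <- [::]) F i t) = cst 0 by apply/funext => t; rewrite big_nil.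
  rewrite big_nil. exact: cvg_cst.
have -> : (fun t => \sum_(j <- i :: r) F j t) = (F i + (fun t => \sum_(j <- r) F j t))
  by apply/funext => t; rewrite big_cons.
rewrite big_cons. exact: (cvgD (H i) IH).
Qed.

Section Cont.
Variables (R : realType) (T : topologicalType).
Implicit Types (f g : T -> R) (x : T).

Lemma contB f g x :
  {for x, continuous f} -> {for x, continuous g} ->
  {for x, continuous (fun t => f t - g t)}.
Proof. move=> hf hg; exact: (cvgB hf hg). Qed.

Lemma contM f g x :
  {for x, continuous f} -> {for x, continuous g} ->
  {for x, continuous (fun t => f t * g t)}.
Proof. move=> hf hg; exact: (cvgM hf hg). Qed.

Lemma contV f x : f x != 0 ->
  {for x, continuous f} -> {for x, continuous (fun t => (f t)^-1)}.
Proof. move=> h hf; exact: (cvgV h hf). Qed.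

Lemma contC (c : R) x : {for x, continuous (fun _ : T => c)}.
Proof. exact: cvg_cst. Qed.

Lemma contsqrt f x :
  {for x, continuous f} -> {for x, continuous (fun t => Num.sqrt (f t))}.
Proof.
move=> hf; apply: (@continuous_comp _ _ _ f (@Num.sqrt R)) => //.
exact: sqrt_continuous.
Qed.

Lemma contnorm f x :
  {for x, continuous f} -> {for x, continuous (fun t => `|f t|)}.
Proof. move=> hf; exact: (cvg_norm hf). Qed.

Lemma contmax f g x :
  {for x, continuous f} -> {for x, continuous g} ->
  {for x, continuous (fun t => Num.max (f t) (g t))}.
Proof. move=> hf hg; exact: (@continuous_max R T f g x hf hg). Qed.

End Cont.

Lemma homot_id (R : realType) (X : topologicalType) (B : set X) (h : X -> X) :
  (forall x, B x -> h x = x) -> homotopic R B B h id.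
Proof.
move=> hx; exists (fun p : R * X => p.2); split.
  apply: continuous_subspaceT => p; exact: cvg_snd.
split; first by move=> t x _ Bx.
by split => x Bx /=; rewrite ?hx.
Qed.


Section General.
Variables (R : realType) (V : finType) (M : nat) (sig : V -> V)
  (rep : 'I_M.+1 -> V) (idx : V -> 'I_M.+1) (side : V -> bool).
Hypotheses (sigK : involutive sig) (side_rep : forall k, side (rep k))
  (idx_rep : forall k, idx (rep k) = k) (idx_sig : forall v, idx (sig v) = idx v)
  (side_sig : forall v, side (sig v) = ~~ side v)
  (rep_idx : forall v, side v -> rep (idx v) = v).

Definition Kcross (s : {set V}) : bool := (s != finset.set0) && [forall u in s, sig u \notin s].

Lemma rep_idxN v : ~~ side v -> rep (idx v) = sig v.
Proof. by move=> sv; rewrite -(idx_sig v) rep_idx // side_sig. Qed.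

Lemma sig_neq v : sig v != v.
Proof. by apply/eqP => h; have := side_sig v; rewrite h; case: (side v). Qed.

Lemma sum_pairs (x : V -> R) :
  \sum_v x v = \sum_k (x (rep k) + x (sig (rep k))).
Proof.
rewrite (partition_big idx predT) //=; apply: eq_bigr => k _.
rewrite (bigD1 (rep k)) ?idx_rep //= (bigD1 (sig (rep k))) /=; last first.
  by rewrite idx_sig idx_rep eqxx sig_neq.
rewrite big1 ?addr0 // => v /andP[/andP[/eqP iv nv] ns].
case sv: (side v).
  by move: nv; rewrite -iv rep_idx ?eqxx.
by move: ns; rewrite -iv rep_idxN ?sv // sigK eqxx.
Qed.


Definition yv (x : V -> R) (k : 'I_M.+1) := x (rep k) - x (sig (rep k)).
Definition nrm (x : V -> R) := Num.sqrt (\sum_k yv x k ^+ 2).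
Definition fm (x : {ptws V -> R}) : 'rV[R]_M.+1 := \row_k (yv x k / nrm x).
Definition sgn v : R := if side v then 1 else -1.
Definition Ssum (y : 'rV[R]_M.+1) := \sum_k `|y ord0 k|.
Definition gm (y : 'rV[R]_M.+1) : {ptws V -> R} :=
  fun v => Num.max (sgn v * y ord0 (idx v)) 0 / Ssum y.

Let A := realization R Kcross.

Lemma A_pair x k : A x -> x (rep k) = 0 \/ x (sig (rep k)) = 0.
Proof.
move=> [x0 [_ /andP[_ /forallP /(_ (rep k)) /implyP H]]].
case: (ltrP 0 (x (rep k))) => h.
  have := H; rewrite !inE => /(_ h); rewrite -leNgt => h2; right; apply/eqP.
  by rewrite eq_le h2 x0.
by left; apply/eqP; rewrite eq_le h x0.
Qed.

Lemma A_abs x k : A x -> `|yv x k| = x (rep k) + x (sig (rep k)).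
Proof.
move=> Ax; have [x0 _] := Ax; rewrite /yv.
case: (A_pair x k Ax) => ->; rewrite ?sub0r ?subr0 ?add0r ?addr0 ?normrN ger0_norm //.
Qed.

Lemma A_sumabs x : A x -> \sum_k `|yv x k| = 1.
Proof.
move=> Ax; have [_ [s1 _]] := Ax.
by rewrite -s1 sum_pairs; apply: eq_bigr => k _; rewrite A_abs.
Qed.

Lemma A_nrm x : A x -> 0 < nrm x.
Proof.
move=> Ax; rewrite /nrm sqrtr_gt0 lt_def sumr_ge0 ?andbT; last by move=> k _; rewrite sqr_ge0.
apply/negP => /eqP /psumr_eq0P h.
have : \sum_k `|yv x k| = 0.
  by rewrite big1 // => k _; apply/eqP; rewrite normr_eq0 -sqrf_eq0 h // => i _; rewrite sqr_ge0.
by rewrite A_sumabs // => /eqP; rewrite oner_eq0.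
Qed.


Lemma fm_sphere x : A x -> sphere R M (fm x).
Proof.
move=> Ax; rewrite /sphere /=.
have n0 := A_nrm x Ax.
under eq_bigr do rewrite mxE expr_div_n.
rewrite -mulr_suml /nrm sqr_sqrtr ?divff //; last by apply: sumr_ge0 => k _; rewrite sqr_ge0.
have := n0; rewrite /nrm sqrtr_gt0 => h; by rewrite gt_eqF.
Qed.

Lemma sphere_Ssum y : sphere R M y -> 0 < Ssum y.
Proof.
rewrite /sphere /= => s1; rewrite /Ssum lt_def sumr_ge0 ?andbT // .
apply/negP => /eqP /psumr_eq0P h.
move: s1; rewrite big1 => [/eqP|k _]; first by rewrite eq_sym oner_eq0.
by have /eqP := h (fun i _ => normr_ge0 _) k isT; rewrite normr_eq0 => /eqP ->; rewrite expr0n.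
Qed.

Lemma maxpn (a : R) : Num.max a 0 + Num.max (- a) 0 = `|a|.
Proof.
case: (boolP (0 <= a)) => h.
  by rewrite (max_idPl h) (max_idPr _) ?addr0 ?ger0_norm // oppr_le0.
rewrite -ltNge in h.
by rewrite (max_idPr (ltW h)) (max_idPl _) ?add0r ?ltr0_norm // oppr_ge0 ltW.
Qed.

Lemma maxpn' (a : R) : Num.max a 0 - Num.max (- a) 0 = a.
Proof.
case: (boolP (0 <= a)) => h.
  by rewrite (max_idPl h) (max_idPr _) ?subr0 // oppr_le0.
rewrite -ltNge in h.
by rewrite (max_idPr (ltW h)) (max_idPl _) ?sub0r ?opprK // oppr_ge0 ltW.
Qed.

Lemma gm_rep y k : gm y (rep k) = Num.max (y ord0 k) 0 / Ssum y.
Proof. by rewrite /gm /sgn side_rep idx_rep mul1r. Qed.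

Lemma gm_sigrep y k : gm y (sig (rep k)) = Num.max (- y ord0 k) 0 / Ssum y.
Proof. by rewrite /gm /sgn side_sig side_rep idx_sig idx_rep /= mulN1r. Qed.

Lemma gm_A y : sphere R M y -> A (gm y).
Proof.
move=> sy; have S0 := sphere_Ssum y sy.
have g0 : forall v, 0 <= gm y v.
  by move=> v; rewrite /gm divr_ge0 ?le_max ?lexx ?orbT // ltW.
have gs : \sum_v gm y v = 1.
  rewrite sum_pairs.
  under eq_bigr do rewrite gm_rep gm_sigrep -mulrDl maxpn.
  by rewrite -mulr_suml divff // gt_eqF.
split => //; split => //; apply/andP; split.
  apply/negP => /eqP e; move: gs.
  rewrite big1 => [/eqP|v _]; first by rewrite eq_sym oner_eq0.
  apply/eqP; rewrite eq_le g0 andbT leNgt; apply/negP => h.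
  have : v \in finset.finset (fun v => 0 < gm y v) by rewrite inE.
  by rewrite e inE.
have pp : forall k, 0 < gm y (rep k) -> 0 < gm y (sig (rep k)) -> False.
  move=> k; rewrite gm_rep gm_sigrep !pmulr_lgt0 ?invr_gt0 // !lt_max !ltxx !orbF.
  by rewrite oppr_gt0 => h1 h2; move: (lt_trans h1 h2); rewrite ltxx.
apply/forallP => u; apply/implyP; rewrite !inE => hu; rewrite -leNgt.
rewrite leNgt; apply/negP => hs.
case su: (side u).
  by apply: (pp (idx u)); rewrite rep_idx.
have e : u = sig (rep (idx u)) by rewrite rep_idxN ?su // sigK.
by apply: (pp (idx u)); rewrite -?e // -(sigK (rep (idx u))) -e.
Qed.


Lemma fm_gm y : sphere R M y -> fm (gm y) = y.
Proof.
move=> sy; have S0 := sphere_Ssum y sy.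
have yk : forall k, yv (gm y) k = y ord0 k / Ssum y.
  by move=> k; rewrite /yv gm_rep gm_sigrep -mulrBl maxpn'.
have nr : nrm (gm y) = (Ssum y)^-1.
  rewrite /nrm; under eq_bigr do rewrite yk expr_div_n.
  rewrite -mulr_suml sy mul1r -exprVn sqrtr_sqr ger0_norm // invr_ge0 ltW //.
apply/rowP => k; rewrite mxE yk nr invrK -mulrA mulVf ?mulr1 //.
by rewrite gt_eqF.
Qed.

Lemma A_pair' x v : A x -> x v = 0 \/ x (sig v) = 0.
Proof.
move=> Ax; case sv: (side v).
  by have := A_pair x (idx v) Ax; rewrite rep_idx.
have e : rep (idx v) = sig v by rewrite rep_idxN ?sv.
by have := A_pair x (idx v) Ax; rewrite e sigK; case; [right|left].
Qed.

Lemma sgn_yv x v : sgn v * yv x (idx v) = x v - x (sig v).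
Proof.
rewrite /sgn /yv; case sv: (side v).
  by rewrite mul1r rep_idx.
by rewrite rep_idxN ?sv // sigK mulN1r opprB.
Qed.

Lemma gm_fm x : A x -> gm (fm x) = x.
Proof.
move=> Ax; have n0 := A_nrm x Ax; have [x0 _] := Ax.
have Sf : Ssum (fm x) = (nrm x)^-1.
  rewrite /Ssum; under eq_bigr do rewrite mxE normrM (ger0_norm (_ : 0 <= (nrm x)^-1)) ?invr_ge0 ?ltW //.
  by rewrite -mulr_suml A_sumabs // mul1r.
apply/funext => v; rewrite /gm Sf mxE (mulrA (sgn v)) sgn_yv invrK.
case: (A_pair' x v Ax) => e; rewrite e.
  rewrite sub0r mulNr (max_idPr _) ?mul0r // oppr_le0 divr_ge0 // ltW //.
rewrite subr0 (max_idPl _); first by rewrite divfK // gt_eqF.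
by rewrite divr_ge0 // ltW.
Qed.


Lemma yv_cont k x : {for x, continuous (fun t : {ptws V -> R} => yv t k)}.
Proof.
have h1 := @ptws_eval R V (rep k) x.
have h2 := @ptws_eval R V (sig (rep k)) x.
rewrite /yv. exact: (@contB R _ _ _ _ h1 h2).
Qed.

Lemma nrm_cont x : {for x, continuous (fun t : {ptws V -> R} => nrm t)}.
Proof.
rewrite /nrm; apply: (@contsqrt R _ (fun t : {ptws V -> R} => \sum_k yv t k ^+ 2)).
apply: (@sum_cont R _ _ (fun k (t : {ptws V -> R}) => yv t k ^+ 2)) => k.
exact: (@contM R _ (fun t : {ptws V -> R} => yv t k) (fun t : {ptws V -> R} => yv t k) x (yv_cont k x) (yv_cont k x)).
Qed.

Lemma fm_cont : {within A, continuous fm}.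
Proof.
apply: continuous_in_subspaceT => x; rewrite inE => Ax.
apply: (@mx_cont R 1 M.+1 _ fm x) => i j.
have -> : (fun t => fm t i j) = (fun t : {ptws V -> R} => yv t j * (nrm t)^-1).
  by apply/funext => t /=; rewrite mxE.
apply: (@contM R _ (fun t : {ptws V -> R} => yv t j) (fun t : {ptws V -> R} => (nrm t)^-1) x (yv_cont j x)).
apply: (@contV R _ (fun t : {ptws V -> R} => nrm t) x); first by rewrite gt_eqF // A_nrm.
exact: nrm_cont.
Qed.

Lemma Ssum_cont y : {for y, continuous Ssum}.
Proof.
apply: (@sum_cont R _ _ (fun k (t : 'rV[R]_M.+1) => `|t ord0 k|)) => k.
apply: (@contnorm R _ (fun t : 'rV[R]_M.+1 => t ord0 k)).
exact: coord_continuous.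
Qed.

Lemma gm_cont : {within sphere R M, continuous gm}.
Proof.
apply: continuous_in_subspaceT => y; rewrite inE => sy.
apply: (@ptws_cont R V _ gm y) => v.
have -> : (fun t => gm t v) = (fun t : 'rV[R]_M.+1 => Num.max (sgn v * t ord0 (idx v)) 0 * (Ssum t)^-1).
  by apply/funext.
apply: (@contM R _ (fun t : 'rV[R]_M.+1 => Num.max (sgn v * t ord0 (idx v)) 0) (fun t => (Ssum t)^-1)).
  apply: (@contmax R _ (fun t : 'rV[R]_M.+1 => sgn v * t ord0 (idx v)) (fun _ => 0)); last exact: contC.
  apply: (@contM R _ (fun _ => sgn v) (fun t : 'rV[R]_M.+1 => t ord0 (idx v))); first exact: contC.
  exact: coord_continuous.
apply: (@contV R _ Ssum y); first by rewrite gt_eqF // sphere_Ssum.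
exact: Ssum_cont.
Qed.

Lemma cross_equiv : homotopy_equivalent R A (sphere R M).
Proof.
exists fm, gm; split; first split.
- exact: fm_cont.
- by move=> _ [x Ax <-]; apply: fm_sphere.
- exact: gm_cont.
- by move=> _ [y sy <-]; apply: gm_A.
split.
  apply: (@homot_id R _ A (gm \o fm)) => x Ax /=; exact: gm_fm.
apply: (@homot_id R _ (sphere R M) (fm \o gm)) => y sy /=; exact: fm_gm.
Qed.

End General.

End Part1.

Section Part2.
Local Open Scope nat_scope.

Section Torus.
Variables (n : nat) (n0 : 0 < n) (ev : ~~ odd n).

Definition hh := n./2.

Lemma nhh : n = hh + hh.
Proof. by rewrite addnn /hh -[in LHS](odd_double_half n) (negbTE ev). Qed.

Lemma shift_eq (a : nat) : a < n -> (a + hh) %% n = if a < hh then a + hh else a - hh.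
Proof.
move=> an; have := nhh; case: ifP => ah E.
  by rewrite modn_small //; lia.
have -> : a + hh = (a - hh) + n by lia.
rewrite modnDr modn_small //; lia.
Qed.

Definition sh (a : 'I_n) : 'I_n := Ordinal (ltn_pmod (a + hh) n0).
Definition sigT (u : 'I_n * 'I_n) := (sh u.1, sh u.2).

Lemma MS : ((n * n) %/ 2 - 1).+1 = n * hh.
Proof.
have e : n * n = n * hh * 2 by rewrite -mulnA muln2 -addnn -nhh.
rewrite e mulnK // subn1 prednK // muln_gt0 n0 /=; have := nhh; lia.
Qed.

Lemma lt1 (k : 'I_((n * n) %/ 2 - 1).+1) : k %/ n < n.
Proof.
have hk : (k : nat) < n * hh by rewrite -MS; exact: ltn_ord.
have : k %/ n < hh by rewrite ltn_divLR // mulnC.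
have := nhh; lia.
Qed.

Definition repT (k : 'I_((n * n) %/ 2 - 1).+1) : 'I_n * 'I_n :=
  (Ordinal (lt1 k), Ordinal (ltn_pmod k n0)).

Lemma idx_lt (a b : nat) : a < hh -> b < n -> a * n + b < ((n * n) %/ 2 - 1).+1.
Proof.
move=> ah bn; rewrite MS mulnC.
have := leq_mul ah (leqnn n); rewrite mulSn; lia.
Qed.

Definition idxv (u : 'I_n * 'I_n) : nat :=
  if u.1 < hh then u.1 * n + u.2 else (u.1 - hh) * n + (u.2 + hh) %% n.

Lemma idxv_lt u : idxv u < ((n * n) %/ 2 - 1).+1.
Proof.
rewrite /idxv; case: ifP => h1; apply: idx_lt => //; try exact: ltn_ord.
  have := ltn_ord u.1; have := nhh; lia.
exact: ltn_pmod.
Qed.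

Definition idxT u : 'I_((n * n) %/ 2 - 1).+1 := Ordinal (idxv_lt u).
Definition sideT (u : 'I_n * 'I_n) : bool := u.1 < hh.

Lemma sh_val (a : 'I_n) : nat_of_ord (sh a) = if a < hh then a + hh else a - hh.
Proof. by rewrite /= shift_eq. Qed.

Lemma shK (a : 'I_n) : sh (sh a) = a.
Proof.
apply: val_inj => /=; rewrite (shift_eq _ (ltn_pmod _ n0)) (shift_eq _ (ltn_ord a)).
have := nhh; have := ltn_ord a.
case: (boolP (a < hh)) => h1 E1 E2.
  by case: ifP => E; lia.
by case: ifP => E; lia.
Qed.

Lemma sigTK : involutive sigT.
Proof. by case=> a b; rewrite /sigT /= !shK. Qed.

Lemma shsh b : b < n -> ((b + hh) %% n + hh) %% n = b.
Proof. by move=> bn; have := shK (Ordinal bn) => /(congr1 val). Qed.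

Lemma side_repT k : sideT (repT k).
Proof.
have hk : (k : nat) < n * hh by rewrite -MS; exact: ltn_ord.
by rewrite /sideT /= ltn_divLR // mulnC.
Qed.

Lemma idx_repT k : idxT (repT k) = k.
Proof.
apply: val_inj; rewrite /= /idxv /=.
have := side_repT k; rewrite /sideT /= => ->.
by rewrite -divn_eq.
Qed.

Lemma side_sigT v : sideT (sigT v) = ~~ sideT v.
Proof.
case: v => a b; rewrite /sideT /= shift_eq //.
have := nhh; have := ltn_ord a.
by case: (boolP (a < hh)) => h1 E1 E2 /=; apply/idP/idP; lia.
Qed.

Lemma idx_sigT v : idxT (sigT v) = idxT v.
Proof.
apply: val_inj; case: v => a b; rewrite /= /idxv /=.
have := side_sigT (a, b); rewrite /sideT /= => ->.
have := nhh; have := ltn_ord a.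
case: (boolP (a < hh)) => h1 E1 E2 /=.
  rewrite shsh // (_ : (a + hh) %% n - hh = a) //.
  rewrite shift_eq // h1; lia.
rewrite (_ : (a + hh) %% n = a - hh) //.
by rewrite shift_eq // (negbTE h1).
Qed.

Lemma rep_idxT v : sideT v -> repT (idxT v) = v.
Proof.
case: v => a b; rewrite /sideT /= => h1.
congr pair; apply: val_inj; rewrite /= /idxv /= h1.
  by rewrite divnMDl // divn_small // addn0.
by rewrite modnMDl modn_small.
Qed.

Lemma cycd_le a b : a < n -> b < n -> cycd n a b <= hh.
Proof. by rewrite /cycd /absdn; have := nhh; lia. Qed.

Lemma cycd_eq a b : a < n -> b < n -> (cycd n a b == hh) = (b == (a + hh) %% n).
Proof.
move=> an bn; rewrite shift_eq // /cycd /absdn; have := nhh.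
by case: ifP => h1 E; apply/eqP/eqP; lia.
Qed.

Lemma dist_le (u v : 'I_n * 'I_n) : torus_dist u v <= n.
Proof.
rewrite /torus_dist; have := nhh.
have := cycd_le _ _ (ltn_ord u.1) (ltn_ord v.1); have := cycd_le _ _ (ltn_ord u.2) (ltn_ord v.2).
lia.
Qed.

Lemma dist_eq (u v : 'I_n * 'I_n) : (torus_dist u v == n) = (v == sigT u).
Proof.
rewrite /torus_dist.
have := cycd_le _ _ (ltn_ord u.1) (ltn_ord v.1); have := cycd_le _ _ (ltn_ord u.2) (ltn_ord v.2).
have := cycd_eq _ _ (ltn_ord u.1) (ltn_ord v.1); have := cycd_eq _ _ (ltn_ord u.2) (ltn_ord v.2).
case: u => a b; case: v => c d /=.
rewrite /sigT /= xpair_eqE -!val_eqE /=.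
move=> e1 e2 h2 h1; rewrite -e1 -e2; have E := nhh.
apply/idP/idP => [/eqP H|/andP [/eqP H1 /eqP H2]].
  by apply/andP; split; apply/eqP; lia.
by apply/eqP; lia.
Qed.

Lemma fdiamT : fdiam (@torus_dist n) = n.
Proof.
apply/eqP; rewrite eqn_leq; apply/andP; split.
  by apply/bigmax_leqP => pq _; apply: dist_le.
set u0 : 'I_n * 'I_n := (Ordinal n0, Ordinal n0).
apply: leq_trans (leq_bigmax (u0, sigT u0)) => /=.
by rewrite (eqP (_ : torus_dist u0 (sigT u0) == n)) // dist_eq.
Qed.

End Torus.

End Part2.

Lemma VR_eq n (n0 : (0 < n)%N) (ev : ~~ odd n) :
  VR_simplex (@torus_dist n) (fdiam (@torus_dist n) - 1) = Kcross _ (sigT n n0).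
Proof.
apply/funext => s; rewrite /VR_simplex /Kcross fdiamT //; congr andb.
apply/forallP/forallP => H u.
  apply/implyP => us; apply/negP => sus.
  have := H u; move=> /implyP /(_ us) /forallP /(_ (sigT n n0 u)) /implyP /(_ sus).
  have := dist_eq n n0 ev u (sigT n n0 u); rewrite eqxx => /eqP ->; lia.
apply/implyP => us; apply/forallP => v; apply/implyP => vs.
have := dist_le n n0 ev u v; have := dist_eq n n0 ev u v.
have : v != sigT n n0 u.
  by apply/eqP => e; have := H u; rewrite us -e vs.
move=> /negbTE -> /eqP; lia.
Qed.

Theorem corollary6p3 (R : realType) (n : nat) :
  (0 < n)%N -> ~~ odd n ->
  homotopy_equivalent R
    (realization R
       (VR_simplex (@torus_dist n) (fdiam (@torus_dist n) - 1)))
    (sphere R ((n * n) %/ 2 - 1)).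
Proof.
move=> n0 ev; rewrite (VR_eq n n0 ev).
exact: (cross_equiv R _ _ _ _ _ _ (sigTK n n0 ev) (side_repT n n0 ev) (idx_repT n n0 ev)
  (idx_sigT n n0 ev) (side_sigT n n0 ev) (rep_idxT n n0 ev)).
Qed.
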